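(* Let $\Gamma$ be a marked graph (the core) with vertices $v_1,\dots,v_m$ and real marks $n_1,\dots,n_m$. For each $i$ let $C_{i1},\dots,C_{is_i}$ be finitely many chains $C_{ij}=[c^{ij}_1,\dots,c^{ij}_{k_{ij}}]$ ($k_{ij}\ge1$) of integers with $c^{ij}_1\ge1$ and $c^{ij}_l\ge2$ for $l\ge2$. Put $p_{ij}=|c^{ij}_1,\dots,c^{ij}_{k_{ij}}|$ and $q_{ij}=|c^{ij}_2,\dots,c^{ij}_{k_{ij}}|$ (so $p_{ij}/q_{ij}=c^{ij}_1-\cfrac{1}{c^{ij}_2-\cfrac{1}{\ddots}}$). Let $\widehat\Gamma$ be the hairy graph obtained by grafting: the mark of $v_i$ is replaced by $n_i+\sum_j c^{ij}_1$, and for each $(i,j)$ the chain $[c^{ij}_2,\dots,c^{ij}_{k_{ij}}]$ (if nonempty) is attached, with its vertex marked $c^{ij}_2$ joined to $v_i$ by a single edge. Then $$\det\widehat\Gamma=\det\Gamma\Big(n_i+\sum_j\frac{p_{ij}}{q_{ij}}\Big)\cdot\prod_{i,j}q_{ij},$$ where $\Gamma(n_i+\sum_j p_{ij}/q_{ij})$ denotes the core graph with the mark of $v_i$ replaced by $n_i+\sum_j p_{ij}/q_{ij}$. Alternatively, $$\det\widehat\Gamma=\det\widetilde\Gamma\cdot\prod_{i,j}(-p_{ij}),$$ where $\widetilde\Gamma$ is obtained from the core graph $\Gamma$ with its original marks $n_i$ by adding, for each pair $(i,j)$, one new vertex with mark $-q_{ij}/p_{ij}$ joined to $v_i$ by a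 single edge.
   Context: A marked graph is a finite graph without loops in which each vertex carries a real number (its mark); its determinant is the determinant of the matrix with the marks on the diagonal and minus the number of edges between $u$ and $v$ in the off-diagonal $(u,v)$ entry; the empty graph has determinant $1$. $|a_1,\dots,a_k|$ denotes the determinant of the chain with marks $a_1,\dots,a_k$ (tridiagonal matrix with diagonal $a_i$ and off-diagonal entries $-1$), and the empty chain has determinant $1$. *)

(* Defs.v *)
From HB Require Import structures.
From mathcomp Require Import all_boot all_order all_algebra all_fingroup.
Set Implicit Arguments. Unset Strict Implicit. Unset Printing Implicit Defensive.
Import Order.TTheory GRing.Theory Num.Theory.
Local Open Scope ring_scope.

(* A marked graph on a finite vertex type V: marks (real numbers) and
   multiplicities of edges between vertices (diagonal ignored: no loops). *)
Definition gmatrix (R : pzRingType) (V : finType) (mark : V -> R)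
  (edge : V -> V -> nat) (u v : V) : R :=
  if u == v then mark u else - (edge u v)%:R.

Definition gdet (R : comPzRingType) (V : finType) (mark : V -> R)
  (edge : V -> V -> nat) : R :=
  \sum_(s : {perm V}) (-1) ^+ s * \prod_(v : V) gmatrix mark edge v (s v).

Definition chain_edge (k : nat) (u v : 'I_k) : nat :=
  ((u.+1 == v :> nat) || (v.+1 == u :> nat))%N.

Definition chain_det (R : comPzRingType) (a : seq R) : R :=
  gdet (fun u : 'I_(size a) => a`_u) (@chain_edge (size a)).

Unset Implicit Arguments.
Section Grafting.
Variables (R : realFieldType) (m : nat) (n : 'I_m -> R)
  (e : 'I_m -> 'I_m -> nat) (s : 'I_m -> nat)
  (k : forall i : 'I_m, 'I_(s i) -> nat)
  (c : forall i : 'I_m, 'I_(s i) -> nat -> int).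
(* chain C_ij = [c i j 0; ...; c i j (k i j - 1)] (0-based indexing) *)

Definition pC (i : 'I_m) (j : 'I_(s i)) : R :=
  chain_det [seq (c i j l)%:~R | l <- iota 0 (k i j)].
Definition qC (i : 'I_m) (j : 'I_(s i)) : R :=
  chain_det [seq (c i j l)%:~R | l <- iota 1 (k i j).-1].

(* Tail vertices of the hairy graph: (i, j, l) stands for the entry
   c i j (l+1) of the chain C_ij, l < k_ij - 1. *)
Definition tailV : finType :=
  {i : 'I_m & {j : 'I_(s i) & 'I_(k i j).-1}}.
Definition tv_i (x : tailV) : nat := tag x.
Definition tv_j (x : tailV) : nat := tag (tagged x).
Definition tv_l (x : tailV) : nat := tagged (tagged x).

Definition hatV : finType := ('I_m + tailV)%type.

Definition hat_mark (x : hatV) : R :=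
  match x with
  | inl v => n v + \sum_(j < s v) (c v j 0)%:~R
  | inr t => (c (tag t) (tag (tagged t)) (tv_l t).+1)%:~R
  end.

Definition hat_edge (x y : hatV) : nat :=
  match x, y with
  | inl u, inl v => e u v
  | inl u, inr t => ((u == tv_i t :> nat) && (tv_l t == 0))%N
  | inr t, inl u => ((u == tv_i t :> nat) && (tv_l t == 0))%N
  | inr t, inr t' => [&& tv_i t == tv_i t', tv_j t == tv_j t' &
                        ((tv_l t).+1 == tv_l t') || ((tv_l t').+1 == tv_l t)]
  end.

Definition leafV : finType := {i : 'I_m & 'I_(s i)}.
Definition tildeV : finType := ('I_m + leafV)%type.

Definition tilde_mark (x : tildeV) : R :=
  match x with
  | inl v => n v
  | inr t => - (qC (tag t) (tagged t) / pC (tag t) (tagged t))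
  end.

Definition tilde_edge (x y : tildeV) : nat :=
  match x, y with
  | inl u, inl v => e u v
  | inl u, inr t => (u == tag t)%N
  | inr t, inl u => (u == tag t)%N
  | inr _, inr _ => 0%N
  end.
End Grafting.

(* Main.v *)
Require Import Defs.
From mathcomp Require Import all_boot all_order all_algebra all_fingroup.
From mathcomp Require Import ring lra zify.
Set Implicit Arguments. Unset Strict Implicit. Unset Printing Implicit Defensive.
Import Order.TTheory GRing.Theory Num.Theory.
Local Open Scope ring_scope.


Section Gen.
Variable R : realFieldType.

Definition fdet (V : finType) (M : V -> V -> R) : R :=
  \sum_(s : {perm V}) (-1) ^+ s * \prod_(v : V) M v (s v).

Lemma fdetE (V : finType) (mark : V -> R) edge :
  gdet mark edge = fdet (gmatrix mark edge).
Proof. by []. Qed.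

Lemma eq_fdet (V : finType) (M N : V -> V -> R) :
  (forall x y, M x y = N x y) -> fdet M = fdet N.
Proof.
by move=> H; apply: eq_bigr => s _; congr (_ * _); apply: eq_bigr => v _.
Qed.

Lemma fdet_ord n (A : 'M[R]_n) : fdet (fun i j => A i j) = \det A.
Proof. by []. Qed.

Section Conj.
Variables (V W : finType) (f : V -> W) (g : W -> V).
Hypotheses (fK : cancel f g) (gK : cancel g f).
Local Open Scope group_scope.

Definition pconj_fun (s : {perm V}) (w : W) := f (s (g w)).
Lemma pconj_inj s : injective (pconj_fun s).
Proof.
move=> x y; rewrite /pconj_fun => /(can_inj fK) H.
by apply: (can_inj gK); apply: (@perm_inj _ s).
Qed.
Definition pconj s : {perm W} := perm (@pconj_inj s).
Lemma pconjE s w : pconj s w = f (s (g w)).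
Proof. by rewrite permE. Qed.
Lemma pconjM s t : pconj (s * t) = pconj s * pconj t.
Proof. by apply/permP => w; rewrite permM !pconjE permM fK. Qed.
Lemma pconj1 : pconj 1 = 1.
Proof. by apply/permP => w; rewrite pconjE !perm1 gK. Qed.
Lemma pconj_tperm x y : pconj (tperm x y) = tperm (f x) (f y).
Proof.
apply/permP => w; rewrite pconjE -{2}[w]gK; set v := g w.
rewrite /tperm !permE /= !(inj_eq (can_inj fK)).
by case: (v == y); case: (v == x).
Qed.
Lemma odd_pconj s : odd_perm (pconj s) = odd_perm s.
Proof.
have [ts -> dts] := prod_tpermP s.
have ->: pconj (\prod_(t <- ts) tperm t.1 t.2)
    = \prod_(t <- [seq (f t.1, f t.2) | t <- ts]) tperm t.1 t.2.
  elim: ts {dts} => [|t ts IH]; first by rewrite !big_nil pconj1.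
  by rewrite /= !big_cons pconjM pconj_tperm IH.
rewrite !odd_perm_prod ?size_map //.
rewrite all_map; apply: sub_all dts => -[a b] /=.
by rewrite /dpair /= (inj_eq (can_inj fK)).
Qed.
End Conj.

Lemma pconjK (V W : finType) (f : V -> W) (g : W -> V) (fK : cancel f g) (gK : cancel g f) :
  cancel (pconj fK gK) (pconj gK fK).
Proof. by move=> s; apply/permP => v; rewrite !pconjE !fK. Qed.

Lemma fdet_transport (V W : finType) (f : V -> W) (M : W -> W -> R) :
  bijective f -> fdet M = fdet (fun x y => M (f x) (f y)).
Proof.
case=> g fK gK; rewrite /fdet.
rewrite (reindex (pconj fK gK)); last first.
  by apply: onW_bij; exists (pconj gK fK); apply: pconjK.
apply: eq_bigr => s _; rewrite odd_pconj; congr (_ * _).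
rewrite (reindex f); last by apply: onW_bij; exists g.
by apply: eq_bigr => v _; rewrite pconjE fK.
Qed.

Lemma bij_of_surj (T T' : finType) (f : T -> T') :
  injective f -> (forall y, exists x, f x = y) -> bijective f.
Proof.
move=> fi fs; apply: inj_card_bij => //.
rewrite -(card_codom fi); apply: subset_leq_card; apply/subsetP => y _.
by have [x <-] := fs y; apply: codom_f.
Qed.

Lemma fdet0 (V : finType) (M : V -> V -> R) : #|V| = 0%N -> fdet M = 1.
Proof.
move=> V0; rewrite /fdet (big_pred1 1%g); last first.
  move=> s /=; symmetry; apply/eqP/permP => v.
  by have := card0_eq V0 v; rewrite !inE.
rewrite odd_perm1 expr0 mul1r big1 // => v _.
by have := card0_eq V0 v; rewrite !inE.
Qed.

Lemma fdet_diag (V : finType) (M : V -> V -> R) :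
  (forall x y, x != y -> M x y = 0) -> fdet M = \prod_v M v v.
Proof.
move=> HM; rewrite /fdet (bigD1 1%g) //= odd_perm1 expr0 mul1r [X in _ + X]big1 ?addr0.
  by apply: eq_bigr => v _; rewrite perm1.
move=> s s1.
have [v sv] : exists v, s v != v.
  apply/existsP; apply: contraNT s1 => /existsPn H; apply/eqP/permP => v.
  by rewrite perm1; apply/eqP; move: (H v); rewrite negbK.
by rewrite (bigD1 v) //= HM ?mul0r ?mulr0 // eq_sym.
Qed.

Lemma sum_enum_val (T : finType) (F : T -> R) :
  \sum_(k < #|T|) F (enum_val k) = \sum_x F x.
Proof.
by rewrite [RHS](reindex (@enum_val T predT)) //; apply: onW_bij; apply: enum_val_bij.
Qed.

End Gen.


Section Schur.
Variable R : realFieldType.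

Lemma fdet_schur (A B : finType) (M : A + B -> A + B -> R) (X : B -> A -> R) :
  (forall b a, \sum_b' M (inr b) (inr b') * X b' a = M (inr b) (inl a)) ->
  fdet M = fdet (fun b b' => M (inr b) (inr b')) *
           fdet (fun a a' => M (inl a) (inl a') - \sum_b M (inl a) (inr b) * X b a').
Proof.
move=> HX.
pose h (i : 'I_(#|A| + #|B|)) : A + B :=
  match split i with inl i => inl (enum_val i) | inr j => inr (enum_val j) end.
pose h' (x : A + B) : 'I_(#|A| + #|B|) :=
  match x with inl a => lshift #|B| (enum_rank a) | inr b => rshift #|A| (enum_rank b) end.
have hK : cancel h h'.
  by move=> i; rewrite /h /h' -[i]splitK; case: (split i) => j; rewrite unsplitK /= enum_valK.
have h'K : cancel h' h.
  case=> x; rewrite /h /h'.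
    by rewrite -[lshift _ _]/(unsplit (inl _)) unsplitK enum_rankK.
  by rewrite -[rshift _ _]/(unsplit (inr _)) unsplitK enum_rankK.
rewrite (fdet_transport M (f := h)); last by exists h'.
pose P := \matrix_(i, j) M (inl (enum_val i)) (inl (enum_val j)) : 'M[R]_#|A|.
pose Q := \matrix_(i, j) M (inl (enum_val i)) (inr (enum_val j)) : 'M[R]_(#|A|, #|B|).
pose Q' := \matrix_(i, j) M (inr (enum_val i)) (inl (enum_val j)) : 'M[R]_(#|B|, #|A|).
pose D := \matrix_(i, j) M (inr (enum_val i)) (inr (enum_val j)) : 'M[R]_#|B|.
pose Xm := \matrix_(i, j) X (enum_val i) (enum_val j) : 'M[R]_(#|B|, #|A|).
have E : fdet (fun x y => M (h x) (h y)) = \det (block_mx P Q Q' D).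
  rewrite -fdet_ord; apply: eq_fdet => i j.
  rewrite -[i]splitK -[j]splitK.
  case: (split i) => i'; case: (split j) => j';
    rewrite /= ?block_mxEul ?block_mxEur ?block_mxEdl ?block_mxEdr mxE /h;
    by rewrite -?[lshift _ _]/(unsplit (inl _)) -?[rshift _ _]/(unsplit (inr _)) !unsplitK.
have DX : D *m Xm = Q'.
  apply/matrixP => i j; rewrite !mxE -HX -[RHS]sum_enum_val.
  by apply: eq_bigr => k _; rewrite !mxE.
have F : block_mx P Q Q' D
    = block_mx (P - Q *m Xm) Q 0 D *m block_mx 1%:M 0 Xm 1%:M.
  rewrite mulmx_block !mulmx1 !mulmx0 ?mul0mx !add0r DX.
  by rewrite subrK.
rewrite E F det_mulmx det_ublock det_lblock !det1 !mulr1 mulrC.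
congr (_ * _).
  rewrite [RHS](fdet_transport _ (enum_val_bij B)).
  by rewrite -fdet_ord; apply: eq_fdet => i j; rewrite mxE.
rewrite [RHS](fdet_transport _ (enum_val_bij A)).
rewrite -fdet_ord; apply: eq_fdet => i j; rewrite !mxE -[in RHS]sum_enum_val.
congr (_ - _); apply: eq_bigr => k _; rewrite !mxE.
by [].
Qed.

End Schur.


Section Blocks.
Variable R : realFieldType.

Lemma fdet_blocks (V I : finType) (tau : V -> I) (M : V -> V -> R) :
  (forall x y, tau x != tau y -> M x y = 0) ->
  fdet M = \prod_(i : I) fdet (fun x y : {x : V | tau x == i} => M (val x) (val y)).
Proof.
move=> HM.
suff H : forall S : {set I},
    fdet (fun x y : {x : V | tau x \in S} => M (val x) (val y))
    = \prod_(i in S) fdet (fun x y : {x : V | tau x == i} => M (val x) (val y)).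
  have := H setT.
  rewrite (fdet_transport M (f := (val : {x : V | tau x \in setT} -> V))); last first.
    exists (fun x => exist _ x (in_setT (tau x))) => [y|x] //; exact: val_inj.
  move=> ->; apply: eq_bigl => i; by rewrite in_setT.
move=> S; have [n] := ubnP #|S|; elim: n S => // n IH S.
rewrite ltnS => cardS.
have [->|[i iS]] := set_0Vmem S.
  rewrite big_set0 fdet0 // card_sig; apply: eq_card0 => x; by rewrite !inE.
rewrite (big_setD1 i iS) /=.
have p1 : forall y : {x : V | tau x == i}, tau (val y) \in S.
  by move=> y; rewrite (eqP (valP y)).
have p2 : forall y : {x : V | tau x \in S :\ i}, tau (val y) \in S.
  by move=> y; have := valP y; rewrite !inE => /andP[].
pose h (u : {x : V | tau x == i} + {x : V | tau x \in S :\ i}) : {x : V | tau x \in S} :=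
  match u with inl y => exist _ (val y) (p1 y) | inr y => exist _ (val y) (p2 y) end.
have hb : bijective h.
  apply: bij_of_surj.
    case=> y; case=> z /= /(congr1 val) /= E; have {E}E : val y = val z := E.
    - by congr inl; apply: val_inj.
    - by have := valP z; rewrite !inE -E (eqP (valP y)) eqxx.
    - by have := valP y; rewrite !inE E (eqP (valP z)) eqxx.
    - by congr inr; apply: val_inj.
  move=> x; case E: (tau (val x) == i).
    by exists (inl (exist _ (val x) E)); apply: val_inj.
  have E' : tau (val x) \in S :\ i by rewrite !inE E (valP x).
  by exists (inr (exist _ (val x) E')); apply: val_inj.
rewrite (fdet_transport _ hb).
rewrite (@fdet_schur _ _ _ _ (fun _ _ => 0)); last first.
  move=> b a; rewrite big1 => [|b' _]; last by rewrite mulr0.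
  symmetry; apply: HM => /=.
  have := valP b; rewrite !inE (eqP (valP a)) => /andP[? _]; by [].
rewrite mulrC; congr (_ * _).
  apply: eq_fdet => x y /=; by rewrite big1 ?subr0 // => b _; rewrite mulr0.
rewrite -IH; last by rewrite (cardsD1 i S) iS in cardS.
by [].
Qed.

End Blocks.


Section Chains.
Variable R : realFieldType.
Implicit Types (a t : seq R).

Definition chm (a : seq R) (u v : nat) : R :=
  if u == v then a`_u else - ((u.+1 == v) || (v.+1 == u))%:R.

Lemma chain_det_fdet a : chain_det a = fdet (fun u v : 'I_(size a) => chm a u v).
Proof. by rewrite /chain_det fdetE; apply: eq_fdet => u v. Qed.

Lemma chain_det_n a n (H : size a = n) :
  chain_det a = fdet (fun u v : 'I_n => chm a u v).
Proof.
rewrite chain_det_fdet (fdet_transport _ (f := cast_ord (esym H))) //.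
by exists (cast_ord H) => x; rewrite ?cast_ordK ?cast_ordKV.
Qed.

Lemma chain_detE a : chain_det a = \det (\matrix_(i, j < size a) chm a i j).
Proof. by rewrite chain_det_fdet -fdet_ord; apply: eq_fdet => i j; rewrite mxE. Qed.

Lemma chain_det_nil : chain_det ([::] : seq R) = 1.
Proof. by rewrite chain_det_fdet fdet0 // card_ord. Qed.

Lemma liftL2 n (j : 'I_n) :
  nat_of_ord (lift (lift ord0 (ord0 : 'I_n.+1)) (lift ord0 j) : 'I_n.+2) = j.+2.
Proof. by rewrite /= /bump /= add1n. Qed.

Lemma chain_det_rec x t :
  chain_det (x :: t) = x * chain_det t - (if t is _ :: t' then chain_det t' else 0).
Proof.
rewrite chain_detE (expand_det_row _ ord0) big_ord_recl.
set A := \matrix_(i, j < size (x :: t)) chm (x :: t) i j.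
have E0 : row' ord0 (col' ord0 A) = \matrix_(i, j < size t) chm t i j.
  by apply/matrixP => i j; rewrite !mxE !lift0 /chm eqSS.
rewrite /cofactor E0 -chain_detE /A mxE /chm /= expr0 mul1r; clear A E0.
case: t => [|y t'].
  by rewrite big_ord0 addr0 subr0.
rewrite big_ord_recl big1 ?addr0; last first.
  by move=> i _; rewrite mxE /chm !lift0 /= oppr0 mul0r.
rewrite mxE /chm !lift0 /=.
set B := row' _ _.
rewrite (expand_det_col _ ord0) big_ord_recl big1 ?addr0; last first.
  by move=> i _; rewrite !mxE /chm !lift0 /= oppr0 mul0r.
have E1 : row' ord0 (col' ord0 B) = \matrix_(i, j < size t') chm t' i j.
  by apply/matrixP => i j; rewrite !mxE liftL2 !lift0 /chm /= !eqSS.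
rewrite /cofactor E1 -chain_detE /B !mxE /= /bump /= expr1 expr0.
by rewrite !mulN1r mul1r opprK.
Qed.


Definition dtail t := if t is _ :: t' then chain_det t' else 0.

Lemma chain_det_rec' x t : chain_det (x :: t) = x * chain_det t - dtail t.
Proof. exact: chain_det_rec. Qed.

Definition dfun t l := if (l <= size t)%N then chain_det (drop l t) else 0.
Definition xs t l := - dfun t l.+1 / dfun t 0.

Lemma dfun0 t : dfun t 0 = chain_det t.
Proof. by rewrite /dfun drop0. Qed.

Lemma dfun1 t : dfun t 1 = dtail t.
Proof. by case: t => [|y t] //=; rewrite /dfun /= drop0. Qed.

Lemma d_rec t l : (l < size t)%N -> dfun t l = t`_l * dfun t l.+1 - dfun t l.+2.
Proof.
move=> lt; rewrite /dfun ltnW // lt (drop_nth 0 lt) chain_det_rec.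
case: (ltnP l.+1 (size t)) => H2.
  by rewrite (drop_nth 0 H2).
by rewrite drop_oversize.
Qed.

Lemma sum_delta r j (F : nat -> R) :
  \sum_(l < r) ((l : nat) == j)%:R * F l = if (j < r)%N then F j else 0.
Proof.
elim: r => [|r IH]; first by rewrite big_ord0.
rewrite big_ord_recr /= IH.
case: (ltngtP j r) => H.
- have -> : (j < r.+1)%N by lia.
  by rewrite mul0r addr0.
- have -> : (j < r.+1)%N = false by lia.
  by rewrite mul0r addr0.
- by rewrite H ltnSn mul1r add0r.
Qed.

Lemma chain_row t r l : size t = r -> (l < r)%N -> chain_det t != 0 ->
  \sum_(l' < r) chm t l l' * xs t l' = - (l == 0)%:R.
Proof.
move=> Hr lr d0.
have Hc : forall l' : nat,
    chm t l l' = (l' == l)%:R * t`_l - (l' == l.+1)%:R - (l'.+1 == l)%:R.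
  move=> l'; rewrite /chm; case: (eqVneq l l') => [<-|ne].
    have -> : (l == l.+1) = false by lia.
    have -> : (l.+1 == l) = false by lia.
    by rewrite ?eqxx mul1r !subr0.
  rewrite mul0r sub0r.
  have [E1|E1] := boolP (l' == l.+1); have [E2|E2] := boolP (l'.+1 == l).
  - by exfalso; move: E1 E2 => /eqP E1 /eqP E2; lia.
  - by rewrite [l.+1 == l']eq_sym E1 /= ?mulr1n subr0.
  - by rewrite orbT /= ?mulr0n ?mulr1n oppr0 sub0r.
  - by rewrite [l.+1 == l']eq_sym (negbTE E1) /= subr0.
under eq_bigr => l' _ do rewrite Hc !mulrBl -mulrA.
rewrite !sumrB (sum_delta r l (fun l' => t`_l * xs t l')).
rewrite (sum_delta r l.+1 (fun l' => xs t l')) lr.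
have -> : (if (l.+1 < r)%N then xs t l.+1 else 0) = xs t l.+1.
  case: ifP => // H; rewrite /xs /dfun.
  have -> : (l.+2 <= size t)%N = false by lia.
  by rewrite oppr0 mul0r.
have Hk : t`_l * xs t l - xs t l.+1 = - dfun t l / dfun t 0.
  rewrite (@d_rec t l) ?Hr // /xs; ring.
rewrite Hk.
case: l lr Hc Hk => [|l0] lr Hc Hk.
  rewrite big1 ?subr0; last by move=> i _; rewrite mul0r.
  by rewrite dfun0 mulNr mulfV.
have -> : \sum_(i < r) (i.+1 == l0.+1)%:R * xs t i = xs t l0.
  under eq_bigr => i _ do rewrite eqSS.
  by rewrite (sum_delta r l0 (fun i => xs t i)) ifT //; lia.
by rewrite /xs mulNr subrr oppr0.
Qed.

Lemma chain_pos t : (forall y, y \in t -> 2 <= y) ->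
  1 <= chain_det t /\ 0 <= dtail t /\ dtail t + 1 <= chain_det t.
Proof.
elim: t => [|y t IH] H.
  by rewrite /= chain_det_nil; split; [|split]; lra.
have IH' : forall z, z \in t -> 2 <= z by move=> z zt; apply: H; rewrite inE zt orbT.
have [h1 [h2 h3]] := IH IH'.
have hy : 2 <= y := H y (mem_head y t).
rewrite chain_det_rec' /=.
split; [|split]; nra.
Qed.

End Chains.


Lemma big_sigT (R' : Type) (idx : R') (op : Monoid.com_law idx) (I : finType)
  (J : I -> finType) (F : {i : I & J i} -> R') :
  \big[op/idx]_(p : {i : I & J i}) F p = \big[op/idx]_i \big[op/idx]_(j : J i) F (Tagged J j).
Proof.
rewrite (sig_big_dep (op := op) (fun _ => true) (fun _ _ => true) (fun i j => F (Tagged J j))) /=.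
by apply: eq_bigr => -[i j].
Qed.

Unset Implicit Arguments.
Section Main.
Variables (R : realFieldType) (m : nat) (n : 'I_m -> R)
  (e : 'I_m -> 'I_m -> nat)
  (s : 'I_m -> nat) (k : forall i : 'I_m, 'I_(s i) -> nat)
  (c : forall i : 'I_m, 'I_(s i) -> nat -> int).
Hypotheses (k_pos : forall i j, (1 <= k i j)%N)
  (c_first : forall i j, 1 <= c i j 0%N)
  (c_rest : forall i j (l : nat), (1 <= l < k i j)%N -> 2 <= c i j l).

Definition ts i j : seq R := [seq (c i j l)%:~R | l <- iota 1 (k i j).-1].

Lemma size_ts i j : size (ts i j) = (k i j).-1.
Proof. by rewrite size_map size_iota. Qed.

Lemma qCE i j : qC R m s k c i j = chain_det (ts i j).
Proof. by []. Qed.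

Lemma pC_rec i j : pC R m s k c i j = (c i j 0)%:~R * qC R m s k c i j - dtail (ts i j).
Proof.
rewrite /pC -(prednK (k_pos i j)) /= -chain_det_rec'; congr chain_det.
Qed.

Lemma ts_ge2 i j y : y \in ts i j -> 2 <= y.
Proof.
case/mapP => l; rewrite mem_iota => Hl ->.
have : (1 <= l < k i j)%N by move: Hl (k_pos i j); lia.
move/c_rest => H; rewrite -(ler_int R) in H; exact: H.
Qed.

Lemma qC_pos i j : 1 <= qC R m s k c i j.
Proof. by have [] := chain_pos (@ts_ge2 i j). Qed.

Lemma pC_pos i j : 1 <= pC R m s k c i j.
Proof.
have [h1 [h2 h3]] := chain_pos (@ts_ge2 i j).
have hc : 1 <= (c i j 0)%:~R :> R by have := c_first i j; rewrite -(ler_int R).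
rewrite pC_rec qCE; nra.
Qed.

Lemma qC_neq0 i j : qC R m s k c i j != 0.
Proof. by have := qC_pos i j; apply: contraTneq => ->; rewrite ler10. Qed.
Lemma pC_neq0 i j : pC R m s k c i j != 0.
Proof. by have := pC_pos i j; apply: contraTneq => ->; rewrite ler10. Qed.


Notation tailV := (tailV m s k).
Notation leafV := (leafV m s).
Notation hM := (gmatrix (hat_mark R m n s k c) (hat_edge m e s k)).

Definition tl i j (l : 'I_(k i j).-1) : tailV :=
  Tagged (fun i => {j : 'I_(s i) & 'I_(k i j).-1}) (Tagged (fun j => 'I_(k i j).-1) l).

Definition tau (x : tailV) : leafV :=
  Tagged (fun i : 'I_m => 'I_(s i)) (tag (tagged x)).

Lemma hatM_off x y : tau x != tau y -> hM (inr x) (inr y) = 0.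
Proof.
move=> H; rewrite /gmatrix.
have -> : (inr x == inr y :> hatV m s k) = false.
  by apply/eqP => -[E]; rewrite E eqxx in H.
case: x y H => [i [j l]] [i' [j' l']] H /=.
rewrite /tv_i /tv_j /=.
case: (eqVneq (i : nat) i') => [/val_inj Ei | ne] /=; last by rewrite oppr0.
subst i'.
case: (eqVneq (j : nat) j') => [/val_inj Ej | ne] /=; last by rewrite oppr0.
by subst j'; rewrite eqxx in H.
Qed.

Lemma hatM_on (i : 'I_m) (j : 'I_(s i)) (l l' : 'I_(k i j).-1) :
  hM (inr (tl i j l)) (inr (tl i j l')) = chm (ts i j) l l'.
Proof.
rewrite /gmatrix /chm.
have -> : (inr (tl i j l) == inr (tl i j l') :> hatV m s k) = (l == l' :> nat).
  apply/eqP/eqP => [E|/val_inj ->//].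
  case: E => E; have E2 := eq_from_Tagged E; by rewrite (eq_from_Tagged E2).
case: (eqVneq (l : nat) l') => [E|ne].
  have El : l = l' := val_inj E; subst l'.
  by rewrite /hat_mark /ts (nth_map 0%N) ?size_iota ?nth_iota ?add1n.
by rewrite /hat_edge /tv_i /tv_j /tv_l /= !eqxx.
Qed.


Lemma Dhat_det : fdet (fun b b' : tailV => hM (inr b) (inr b'))
  = \prod_(i < m) \prod_(j < s i) qC R m s k c i j.
Proof.
rewrite (fdet_blocks (tau := tau)); last exact: hatM_off.
rewrite big_sigT; apply: eq_bigr => i _; apply: eq_bigr => j _.
pose f (l : 'I_(k i j).-1) : {x : tailV | tau x == Tagged (fun i : 'I_m => 'I_(s i)) j} :=
  exist _ (tl i j l) (eqxx _).
have fb : bijective f.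
  apply: bij_of_surj.
    move=> l1 l2 /(congr1 val) /= E.
    by have E2 := eq_from_Tagged E; rewrite (eq_from_Tagged E2).
  case=> -[i' [j' l']] hx; have h := eqP hx.
  have Ei : i' = i := congr1 tag h.
  subst i'; have Ej : j' = j := eq_from_Tagged h; subst j'.
  by exists l'; apply: val_inj.
rewrite (fdet_transport _ fb) qCE (chain_det_n (size_ts i j)).
by apply: eq_fdet => l l'; rewrite /= hatM_on.
Qed.


Definition Xh (b : tailV) (a : 'I_m) : R :=
  if tag b == a then xs (ts (tag b) (tag (tagged b))) (tagged (tagged b)) else 0.

Lemma hat_HX b a : \sum_b' hM (inr b) (inr b') * Xh b' a = hM (inr b) (inl a).
Proof.
case: b => i [j l].
rewrite big_sigT (bigD1 i) //= [X in _ + X]big1 ?addr0; last first.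
  move=> i' ne; apply: big1 => y _; rewrite hatM_off ?mul0r //.
  by apply/eqP => /(congr1 tag) /= E; rewrite E eqxx in ne.
rewrite big_sigT (bigD1 j) //= [X in _ + X]big1 ?addr0; last first.
  move=> j' ne; apply: big1 => l' _; rewrite hatM_off ?mul0r //.
  apply/eqP => H; have E : j = j' := eq_from_Tagged H; by rewrite E eqxx in ne.
under eq_bigr => l' _ do rewrite (hatM_on i j l l').
rewrite /Xh /=.
case: (eqVneq i a) => [<-|ne].
  rewrite (chain_row (size_ts i j)) ?ltn_ord ?(qC_neq0 i j) //.
  by rewrite /gmatrix /= /hat_edge /tv_i /tv_l /= eqxx.
rewrite big1; last by move=> l' _; rewrite mulr0.
rewrite /gmatrix /= /hat_edge /tv_i /tv_l /=.
have -> : (a == i :> nat) = false by apply/eqP => /val_inj E; rewrite E eqxx in ne.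
by rewrite /= oppr0.
Qed.


Lemma hat_row_term a a' j (l : 'I_(k a j).-1) :
  hM (inl a) (inr (tl a j l)) * Xh (tl a j l) a'
  = - ((l : nat) == 0)%:R * (if a == a' then xs (ts a j) l else 0).
Proof. by rewrite /gmatrix /= /hat_edge /tv_i /tv_l /= eqxx /Xh /=. Qed.

Lemma sum_first i j :
  \sum_(l < (k i j).-1) - ((l : nat) == 0)%:R * xs (ts i j) l = - xs (ts i j) 0.
Proof.
under eq_bigr => l _ do rewrite mulNr.
rewrite sumrN (sum_delta _ 0 (fun l => xs (ts i j) l)).
case: ifP => // H.
have E : ts i j = [::] by apply/size0nil; rewrite size_ts; lia.
by rewrite E /xs dfun1 /= oppr0 mul0r oppr0.
Qed.

Lemma hat_SC a a' :
  hM (inl a) (inl a') - \sum_b hM (inl a) (inr b) * Xh b a'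
  = gmatrix (fun v => n v + \sum_(j < s v) pC R m s k c v j / qC R m s k c v j) e a a'.
Proof.
rewrite big_sigT (bigD1 a) //= [X in _ - (_ + X)]big1 ?addr0; last first.
  move=> i ne; apply: big1 => y _.
  rewrite /gmatrix /= /hat_edge /tv_i /=.
  have -> : (a == i :> nat) = false by apply/eqP => /val_inj E; rewrite E eqxx in ne.
  by rewrite /= oppr0 mul0r.
rewrite big_sigT.
under eq_bigr => j _ do under eq_bigr => l _ do rewrite (hat_row_term a a' j l).
case: (eqVneq a a') => [<-|ne].
  under eq_bigr => j _ do rewrite sum_first.
  rewrite /gmatrix /= !eqxx /= sumrN opprK -addrA -big_split /=.
  congr (_ + _); apply: eq_bigr => j _.
  rewrite pC_rec /xs dfun1 dfun0 -qCE.
  by field; apply: qC_neq0.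
rewrite big1; last by move=> j _; apply: big1 => l _; rewrite mulr0.
rewrite subr0 /gmatrix /=.
have -> : (inl a == inl a' :> hatV m s k) = false by apply/eqP => -[E]; rewrite E eqxx in ne.
by rewrite (negbTE ne).
Qed.


Notation tM := (gmatrix (tilde_mark R m n s k c) (tilde_edge m e s)).
Notation pp := (pC R m s k c).
Notation qq := (qC R m s k c).

Definition Xt (l : leafV) (a : 'I_m) : R :=
  if tag l == a then pp (tag l) (tagged l) / qq (tag l) (tagged l) else 0.

Lemma tilde_HX l a : \sum_l' tM (inr l) (inr l') * Xt l' a = tM (inr l) (inl a).
Proof.
rewrite (bigD1 l) //= [X in _ + X]big1 ?addr0; last first.
  move=> l' ne; rewrite /gmatrix.
  have -> : (inr l == inr l' :> tildeV m s) = false.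
    by apply/eqP => -[E]; rewrite E eqxx in ne.
  by rewrite /= oppr0 mul0r.
rewrite /gmatrix eqxx /Xt.
case: l => i j /=.
case: (eqVneq i a) => [E|ne].
  subst a.
  rewrite ?eqxx /=.
  have := pC_neq0 i j; have := qC_neq0 i j => hq hp.
  by field; rewrite hq hp.
by rewrite mulr0 oppr0.
Qed.

Lemma Dtilde_det : fdet (fun l l' : leafV => tM (inr l) (inr l'))
  = \prod_(i < m) \prod_(j < s i) - (qq i j / pp i j).
Proof.
rewrite fdet_diag; last first.
  move=> x y ne; rewrite /gmatrix.
  have -> : (inr x == inr y :> tildeV m s) = false.
    by apply/eqP => -[E]; rewrite E eqxx in ne.
  by rewrite /= oppr0.
rewrite big_sigT; apply: eq_bigr => i _; apply: eq_bigr => j _.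
by rewrite /gmatrix eqxx.
Qed.

Lemma tilde_SC a a' :
  tM (inl a) (inl a') - \sum_l tM (inl a) (inr l) * Xt l a'
  = gmatrix (fun v => n v + \sum_(j < s v) pp v j / qq v j) e a a'.
Proof.
rewrite big_sigT (bigD1 a) //= [X in _ - (_ + X)]big1 ?addr0; last first.
  move=> i ne; apply: big1 => y _.
  rewrite /gmatrix /=.
  have -> : (a == i) = false by rewrite eq_sym (negbTE ne).
  by rewrite /= oppr0 mul0r.
under eq_bigr => j _ do rewrite /gmatrix /= eqxx /Xt /=.
case: (eqVneq a a') => [<-|ne].
  rewrite /gmatrix /=.
  have -> : (inl a == inl a :> tildeV m s) = true by apply/eqP.
  rewrite eqxx; under eq_bigr => j _ do rewrite mulN1r.
  by rewrite sumrN opprK.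
rewrite big1; last by move=> j _; rewrite mulr0.
rewrite subr0 /gmatrix.
have -> : (inl a == inl a' :> tildeV m s) = false by apply/eqP => -[E]; rewrite E eqxx in ne.
by rewrite (negbTE ne).
Qed.

Lemma main_hat :
  gdet (hat_mark R m n s k c) (hat_edge m e s k)
    = gdet (fun v => n v + \sum_(j < s v) pp v j / qq v j) e
      * \prod_(i < m) \prod_(j < s i) qq i j.
Proof.
rewrite !fdetE (fdet_schur hat_HX) Dhat_det (eq_fdet hat_SC) mulrC.
by [].
Qed.

Lemma main_tilde :
  gdet (tilde_mark R m n s k c) (tilde_edge m e s)
    = (\prod_(i < m) \prod_(j < s i) - (qq i j / pp i j))
      * gdet (fun v => n v + \sum_(j < s v) pp v j / qq v j) e.
Proof.
rewrite !fdetE (fdet_schur tilde_HX) Dtilde_det (eq_fdet tilde_SC).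
by [].
Qed.

End Main.



Theorem theorem2p7 (R : realFieldType) (m : nat) (n : 'I_m -> R)
  (e : 'I_m -> 'I_m -> nat)
  (e_sym : forall u v, e u v = e v u) (e_noloop : forall u, e u u = 0%N)
  (s : 'I_m -> nat) (k : forall i : 'I_m, 'I_(s i) -> nat)
  (c : forall i : 'I_m, 'I_(s i) -> nat -> int)
  (k_pos : forall i j, (1 <= k i j)%N)
  (c_first : forall i j, 1 <= c i j 0%N)
  (c_rest : forall i j (l : nat), (1 <= l < k i j)%N -> 2 <= c i j l) :
  gdet (hat_mark R m n s k c) (hat_edge m e s k)
    = gdet (fun v => n v + \sum_(j < s v) pC R m s k c v j / qC R m s k c v j) e
      * \prod_(i < m) \prod_(j < s i) qC R m s k c i j
  /\
  gdet (hat_mark R m n s k c) (hat_edge m e s k)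
    = gdet (tilde_mark R m n s k c) (tilde_edge m e s)
      * \prod_(i < m) \prod_(j < s i) (- pC R m s k c i j).
Proof.
have H1 := main_hat R m n e s k c k_pos c_rest.
split; first exact: H1.
rewrite H1 (main_tilde R m n e s k c k_pos c_first c_rest).
rewrite [RHS]mulrAC [RHS]mulrC; congr (_ * _).
rewrite -big_split; apply: eq_bigr => i _; rewrite -big_split; apply: eq_bigr => j _ /=.
have hp := pC_neq0 R m s k c k_pos c_first c_rest i j.
by field.
Qed.
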